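(* Let $X_1,\ldots,X_k\in\mathbf{M}_{2N}(\mathbb{C})$ commute pairwise and satisfy $X_j^{*}=X_j^{\sharp}$ for all $j$. (1) There is a single symplectic unitary $U$ such that for all $j$, \[U^{*}X_jU=\begin{bmatrix}T_j & S_j\\ -\overline{S_j} & \overline{T_j}\end{bmatrix}\] with each $T_j$ upper-triangular and each $S_j$ strictly upper-triangular ($N\times N$ blocks). (2) If, in addition, the $X_j$ are normal, then there is a single symplectic unitary $U$ such that for all $j$, \[U^{*}X_jU=\begin{bmatrix}D_j & 0\\ 0 & \overline{D_j}\end{bmatrix}\] with each $D_j$ diagonal. (3) Every symplectic unitary has determinant one.
   Context: For $X\in\mathbf{M}_{2N}(\mathbb{C})$ written in $N\times N$ blocks $X=\begin{bmatrix}A&B\\C&D\end{bmatrix}$, the dual operation is $X^{\sharp}=\begin{bmatrix}D^{\mathrm T}&-B^{\mathrm T}\\-C^{\mathrm T}&A^{\mathrm T}\end{bmatrix}$, equivalently $X^\sharp=-ZX^{\mathrm T}Z$ where $Z=\begin{bmatrix}0&I\\-I&0\end{bmatrix}$. A symplectic unitary is a unitary $U\in\mathbf{M}_{2N}(\mathbb{C})$ with $U^{\mathrm T}ZU=Z$. $\overline{M}$ denotes the entrywise complex conjugate. *)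

(* Defs.v *)
From HB Require Import structures.
From mathcomp Require Import all_boot all_order all_algebra.
From mathcomp Require Import reals.
From mathcomp.real_closed Require Import complex.
Set Implicit Arguments. Unset Strict Implicit. Unset Printing Implicit Defensive.
Import Order.TTheory GRing.Theory Num.Theory.
Local Open Scope ring_scope.

(* Generic over a numClosedFieldType; the statement instantiates it with R[i], R : realType (= C). *)
Section Defs.
Variable C : numClosedFieldType.

Definition mxconj m n (A : 'M[C]_(m, n)) : 'M[C]_(m, n) := map_mx (fun x => x^*) A.
Definition adjmx m n (A : 'M[C]_(m, n)) : 'M[C]_(n, m) := (mxconj A)^T.

Definition Zmx N : 'M[C]_(N + N) := block_mx 0 1%:M (- 1%:M) 0.
Definition sharp N (X : 'M[C]_(N + N)) : 'M[C]_(N + N) := - (Zmx N *m X^T *m Zmx N).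

Definition unitary_mx n (U : 'M[C]_n) : Prop := adjmx U *m U = 1%:M.
Definition symplectic_unitary N (U : 'M[C]_(N + N)) : Prop :=
  unitary_mx U /\ U^T *m Zmx N *m U = Zmx N.

Definition normal_mx n (A : 'M[C]_n) : Prop := A *m adjmx A = adjmx A *m A.

Definition upper_tri n (T : 'M[C]_n) : Prop := forall i j : 'I_n, (j < i)%N -> T i j = 0.
Definition strict_upper_tri n (S : 'M[C]_n) : Prop := forall i j : 'I_n, (j <= i)%N -> S i j = 0.
Definition diag_matrix n (D : 'M[C]_n) : Prop := forall i j : 'I_n, i != j -> D i j = 0.
End Defs.

(* Main.v *)
Require Import Defs.
From HB Require Import structures.
From mathcomp Require Import all_boot all_order all_algebra.
From mathcomp Require Import reals.
From mathcomp.real_closed Require Import complex.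
From mathcomp Require Import spectral zify.
Set Implicit Arguments. Unset Strict Implicit. Unset Printing Implicit Defensive.
Import Order.TTheory GRing.Theory Num.Theory.
Local Open Scope ring_scope.

Section Basic.
Variable C : numClosedFieldType.
Implicit Types (m n p : nat).

Lemma mxconjK m n (A : 'M[C]_(m, n)) : mxconj (mxconj A) = A.
Proof. by apply/matrixP => i j; rewrite !mxE conjCK. Qed.
Lemma mxconjM m n p (A : 'M[C]_(m, n)) (B : 'M[C]_(n, p)) :
  mxconj (A *m B) = mxconj A *m mxconj B.
Proof. by rewrite /mxconj map_mxM. Qed.
Lemma mxconjD m n (A B : 'M[C]_(m, n)) : mxconj (A + B) = mxconj A + mxconj B.
Proof. by apply/matrixP => i j; rewrite !mxE rmorphD. Qed.
Lemma mxconjN m n (A : 'M[C]_(m, n)) : mxconj (- A) = - mxconj A.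
Proof. by apply/matrixP => i j; rewrite !mxE rmorphN. Qed.
Lemma mxconj0 m n : mxconj (0 : 'M[C]_(m, n)) = 0.
Proof. by apply/matrixP => i j; rewrite !mxE rmorph0. Qed.
Lemma mxconj1 n : mxconj (1%:M : 'M[C]_n) = 1%:M.
Proof. by apply/matrixP => i j; rewrite !mxE rmorphMn rmorph1. Qed.
Lemma mxconjZ m n a (A : 'M[C]_(m, n)) : mxconj (a *: A) = a^* *: mxconj A.
Proof. by apply/matrixP => i j; rewrite !mxE rmorphM. Qed.
Lemma mxconj_tr m n (A : 'M[C]_(m, n)) : mxconj (A^T) = (mxconj A)^T.
Proof. by apply/matrixP => i j; rewrite !mxE. Qed.
Lemma mxconj_block m1 m2 n1 n2 (A : 'M[C]_(m1,n1)) (B : 'M[C]_(m1,n2))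
  (D : 'M[C]_(m2,n1)) (E : 'M[C]_(m2,n2)) :
  mxconj (block_mx A B D E) = block_mx (mxconj A) (mxconj B) (mxconj D) (mxconj E).
Proof. by rewrite /mxconj map_block_mx. Qed.
Lemma mxconj_col m1 m2 n (A : 'M[C]_(m1,n)) (B : 'M[C]_(m2,n)) :
  mxconj (col_mx A B) = col_mx (mxconj A) (mxconj B).
Proof. by rewrite /mxconj map_col_mx. Qed.

Lemma adjmxM m n p (A : 'M[C]_(m, n)) (B : 'M[C]_(n, p)) :
  adjmx (A *m B) = adjmx B *m adjmx A.
Proof. by rewrite /adjmx mxconjM trmx_mul. Qed.
Lemma adjmxK m n (A : 'M[C]_(m, n)) : adjmx (adjmx A) = A.
Proof. by rewrite /adjmx mxconj_tr trmxK mxconjK. Qed.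
Lemma adjmx0 m n : adjmx (0 : 'M[C]_(m, n)) = 0.
Proof. by rewrite /adjmx mxconj0 trmx0. Qed.
Lemma adjmxD m n (A B : 'M[C]_(m, n)) : adjmx (A + B) = adjmx A + adjmx B.
Proof. by rewrite /adjmx mxconjD linearD. Qed.
Lemma adjmxZ m n a (A : 'M[C]_(m, n)) : adjmx (a *: A) = a^* *: adjmx A.
Proof. by rewrite /adjmx mxconjZ linearZ. Qed.
Lemma adjmx1 n : adjmx (1%:M : 'M[C]_n) = 1%:M.
Proof. by rewrite /adjmx mxconj1 trmx1. Qed.
Lemma adjmx_col m1 m2 n (A : 'M[C]_(m1,n)) (B : 'M[C]_(m2,n)) :
  adjmx (col_mx A B) = row_mx (adjmx A) (adjmx B).
Proof. by rewrite /adjmx mxconj_col tr_col_mx. Qed.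

Lemma mxconjZmx N : mxconj (Zmx C N) = Zmx C N.
Proof. by rewrite /Zmx mxconj_block mxconjN mxconj1 mxconj0. Qed.
Lemma trZmx N : (Zmx C N)^T = - Zmx C N.
Proof.
by rewrite /Zmx tr_block_mx !trmx0 linearN /= trmx1 -[RHS]scaleN1r scale_block_mx
  !scaleN1r !oppr0 opprK.
Qed.
Lemma adjZmx N : adjmx (Zmx C N) = - Zmx C N.
Proof. by rewrite /adjmx mxconjZmx trZmx. Qed.
Lemma ZZmx N : Zmx C N *m Zmx C N = - 1%:M.
Proof.
rewrite /Zmx mulmx_block !(mulmx0, mul0mx, mulmx1, mul1mx, add0r, addr0).
rewrite ?mulmxN ?mulNmx ?mulmx1 ?mul1mx.
by rewrite [in RHS](scalar_mx_block N N) opp_block_mx !oppr0.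
Qed.
Lemma dummy : True. Proof. by []. 
Qed.
End Basic.

Section Quat.
Variable C : numClosedFieldType.
Variable N : nat.
Local Notation n := (N + N).
Local Notation Z := (Zmx C N).

Lemma quat_block (M : 'M[C]_(N + N)) : Z *m mxconj M = M *m Z ->
  M = block_mx (ulsubmx M) (ursubmx M) (- mxconj (ursubmx M)) (mxconj (ulsubmx M)).
Proof.
have eM := esym (submxK M).
set A := ulsubmx M in eM *; set B := ursubmx M in eM *.
set D := dlsubmx M in eM *; set E := drsubmx M in eM *.
rewrite eM /Zmx mxconj_block !mulmx_block.
rewrite !(mulmx0, mul0mx, mulmx1, mul1mx, add0r, addr0, mulNmx, mulmxN).
move=> /eq_block_mx [e1 e2 e3 e4].
by rewrite e4 (oppr_inj e3).
Qed.

Definition J m (A : 'M[C]_(m, n)) := mxconj A *m Z.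

Lemma JM m p (K : 'M[C]_(m, p)) (A : 'M[C]_(p, n)) : J (K *m A) = mxconj K *m J A.
Proof. by rewrite /J mxconjM mulmxA. Qed.
Lemma JJ m (A : 'M[C]_(m, n)) : J (J A) = - A.
Proof. by rewrite /J mxconjM mxconjK mxconjZmx -mulmxA ZZmx mulmxN mulmx1. Qed.
Lemma JD m (A B : 'M[C]_(m, n)) : J (A + B) = J A + J B.
Proof. by rewrite /J mxconjD mulmxDl. Qed.
Lemma JZ m a (A : 'M[C]_(m, n)) : J (a *: A) = a^* *: J A.
Proof. by rewrite /J mxconjZ scalemxAl. Qed.
Lemma adjJ m (A : 'M[C]_(m, n)) : adjmx (J A) = - Z *m A^T.
Proof. by rewrite /J adjmxM adjZmx /adjmx mxconjK. Qed.
Lemma mxconj_adj m p (A : 'M[C]_(m, p)) : mxconj (adjmx A) = A^T.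
Proof. by rewrite /adjmx mxconj_tr mxconjK. Qed.
Lemma adj_tr m p (A : 'M[C]_(m, p)) : adjmx (A^T) = mxconj A.
Proof. by rewrite /adjmx mxconj_tr trmxK. Qed.
Lemma JperpE m p (A : 'M[C]_(m, n)) (B : 'M[C]_(p, n)) :
  A *m adjmx (J B) = - (B *m adjmx (J A))^T.
Proof.
rewrite !adjJ !mulNmx !mulmxN linearN /= opprK !trmx_mul trmxK trZmx.
by rewrite mulmxN mulNmx mulmxA.
Qed.
Lemma JJperp m p (A : 'M[C]_(m, n)) (B : 'M[C]_(p, n)) :
  J A *m adjmx (J B) = mxconj (A *m adjmx B).
Proof.
rewrite adjJ /J mulNmx mulmxN !mulmxA -(mulmxA _ Z Z) ZZmx mulmxN mulmx1 mulNmx opprK.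
by rewrite mxconjM mxconj_adj.
Qed.
Lemma J_col m1 m2 (A : 'M[C]_(m1, n)) (B : 'M[C]_(m2, n)) :
  J (col_mx A B) = col_mx (J A) (J B).
Proof. by rewrite /J mxconj_col mul_col_mx. Qed.
Lemma row_J m (A : 'M[C]_(m, n)) i : row i (J A) = J (row i A).
Proof.
rewrite /J row_mul; congr (_ *m _); by apply/matrixP => a b; rewrite !mxE.
Qed.

Definition Qm m (q : nat -> 'rV[C]_n) : 'M[C]_(m, n) := \matrix_(i < m) q i.
Definition Wm m q : 'M[C]_(m + m, n) := col_mx (Qm m q) (J (Qm m q)).

Lemma rowWl m q (i : 'I_m) : row (lshift m i) (Wm m q) = q i.
Proof. by rewrite rowKu rowK. Qed.
Lemma rowWr m q (i : 'I_m) : row (rshift m i) (Wm m q) = J (q i).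
Proof. by rewrite rowKd row_J rowK. Qed.
Lemma qW m q i : (i < m)%N -> (q i <= Wm m q)%MS.
Proof. by move=> im; rewrite -(rowWl q (Ordinal im)) row_sub. Qed.
Lemma JqW m q i : (i < m)%N -> (J (q i) <= Wm m q)%MS.
Proof. by move=> im; rewrite -(rowWr q (Ordinal im)) row_sub. Qed.

Lemma JW m q : J (Wm m q) = Zmx C m *m Wm m q.
Proof.
rewrite /Wm J_col JJ /Zmx mul_block_col.
by rewrite !(mul0mx, mul1mx, mulNmx, add0r, addr0).
Qed.
Lemma J_sub m q p (A : 'M[C]_(p, n)) : (A <= Wm m q)%MS -> (J A <= Wm m q)%MS.
Proof. by move=> /submxP[D ->]; rewrite JM JW mulmxA submxMl. Qed.

Lemma perpL p a b (W : 'M[C]_(p, n)) (w : 'M[C]_(a, n)) (v : 'M[C]_(b, n)) :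
  (w <= W)%MS -> v *m adjmx W = 0 -> w *m adjmx v = 0.
Proof.
by move=> /submxP[D ->] vW; rewrite -mulmxA -[W]adjmxK -adjmxM vW adjmx0 mulmx0.
Qed.
Lemma perpR p a b (W : 'M[C]_(p, n)) (w : 'M[C]_(a, n)) (v : 'M[C]_(b, n)) :
  (w <= W)%MS -> v *m adjmx W = 0 -> v *m adjmx w = 0.
Proof.
by move=> wW vW; rewrite -[v]adjmxK -adjmxM (perpL wW vW) adjmx0.
Qed.
Lemma Jperp m q b (v : 'M[C]_(b, n)) : v *m adjmx (Wm m q) = 0 -> J v *m adjmx (Wm m q) = 0.
Proof.
move=> vW; have h := JJperp v (J (Wm m q)).
rewrite JJ (perpR (J_sub (submx_refl (Wm m q))) vW) mxconj0 in h.
have e : adjmx (- Wm m q) = - adjmx (Wm m q) by rewrite /adjmx mxconjN linearN.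
by apply/eqP; rewrite -oppr_eq0 -mulmxN -e h.
Qed.

Lemma mx_entry m p (A : 'M[C]_(m, n)) (B : 'M[C]_(p, n)) i j :
  (A *m adjmx B) i j = (row i A *m adjmx (row j B)) 0 0.
Proof. rewrite !mxE; apply: eq_bigr => l _; by rewrite !mxE. Qed.

Lemma Wunit m q :
  (forall i, (i < m)%N -> q i *m adjmx (q i) = 1%:M) ->
  (forall i j, (i < m)%N -> (j < m)%N -> i != j -> q i *m adjmx (q j) = 0) ->
  (forall i j, (i < m)%N -> (j < m)%N -> q i *m adjmx (J (q j)) = 0) ->
  Wm m q *m adjmx (Wm m q) = 1%:M.
Proof.
move=> H1 H2 H3.
have QQ : Qm m q *m adjmx (Qm m q) = 1%:M.
  apply/matrixP => a b; rewrite mx_entry !rowK [RHS]mxE.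
  case: (eqVneq a b) => [->|ab]; first by rewrite H1 // mxE eqxx.
  by rewrite H2 // mxE.
have QJ : Qm m q *m adjmx (J (Qm m q)) = 0.
  by apply/matrixP => a b; rewrite mx_entry row_J !rowK H3 // !mxE.
rewrite /Wm adjmx_col mul_col_row QQ QJ JJperp QQ mxconj1.
rewrite -[J _ *m _]adjmxK adjmxM adjmxK QJ adjmx0.
by rewrite [RHS](scalar_mx_block m m).
Qed.

Variable k : nat.
Variable Y : 'I_k -> 'M[C]_n.
Hypothesis Ycomm : forall j l, Y j *m Y l = Y l *m Y j.
Hypothesis YJ : forall j, mxconj (Y j) *m Z = Z *m Y j.

Lemma JY m (A : 'M[C]_(m, n)) j : J (A *m Y j) = J A *m Y j.
Proof. by rewrite /J mxconjM -mulmxA YJ mulmxA. Qed.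

Definition Inv m q :=
  [/\ forall i, (i < m)%N -> q i *m adjmx (q i) = 1%:M,
      forall i j, (i < m)%N -> (j < m)%N -> i != j -> q i *m adjmx (q j) = 0 &
      forall i j, (i < m)%N -> (j < m)%N -> q i *m adjmx (J (q j)) = 0] /\
  [/\ forall j i, (i < m)%N -> (q i *m Y j <= Wm m q)%MS,
      forall j c i, (c < i)%N -> (i < m)%N -> q c *m Y j *m adjmx (q i) = 0 &
      forall j c i, (c <= i)%N -> (i < m)%N -> q c *m Y j *m adjmx (J (q i)) = 0].

Lemma Inv0 q : Inv 0 q.
Proof. by do 2 split. Qed.


Lemma unit_adj m p (A : 'M[C]_(m, p)) : A \is unitarymx -> A *m adjmx A = 1%:M.
Proof.
move/unitarymxP => <-; congr (_ *m _); by apply/matrixP => i j; rewrite !mxE.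
Qed.
Lemma adj_unit m p (A : 'M[C]_(m, p)) : A *m adjmx A = 1%:M -> A \is unitarymx.
Proof.
move=> H; apply/unitarymxP; rewrite -H; congr (_ *m _); by apply/matrixP => i j; rewrite !mxE.
Qed.
Lemma adj_t m p (A : 'M[C]_(m, p)) : (A ^t Num.Def.conjC)%sesqui = adjmx A.
Proof. by apply/matrixP => i j; rewrite !mxE. Qed.

Lemma tr11 (A : 'M[C]_1) : A^T = A.
Proof. by apply/matrixP => i j; rewrite !ord1 mxE. Qed.

Lemma step m q : Inv m q -> (m < N)%N ->
  exists v, Inv m.+1 (fun i => if i == m then v else q i).
Proof.
move=> [[o1 o2 o3] [s t u]] mN.
set W := Wm m q.
have Wu : W *m adjmx W = 1%:M := Wunit o1 o2 o3.
have rW : \rank W = (m + m)%N.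
  apply/eqP; rewrite eqn_leq rank_leq_row /=.
  by rewrite -{1}(mxrank1 C (m + m)) -Wu mxrankM_maxl.
set K := kermx (adjmx W).
have rK : \rank K = (n - (m + m))%N.
  by rewrite mxrank_ker /adjmx mxrank_tr /mxconj mxrank_map rW.
set B := schmidt (row_base K).
have Bu : B *m adjmx B = 1%:M by apply/unit_adj/schmidt_unitarymx/rank_leq_col.
have BK : (B <= K)%MS.
  by rewrite /B (eqmx_schmidt_free (row_base_free K)) eq_row_base.
have BW : B *m adjmx W = 0 by apply/sub_kermxP.
have WB : W *m adjmx B = 0.
  by have := congr1 (fun A => adjmx A) BW; rewrite adjmxM adjmxK adjmx0.
have mmn : (m + m <= n)%N by rewrite -rW rank_leq_col.
have complete : adjmx W *m W + adjmx B *m B = 1%:M.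
  have Gu : col_mx W B \is unitarymx.
    apply/adj_unit; rewrite adjmx_col mul_col_row Wu WB BW Bu.
    by rewrite -scalar_mx_block.
  have := mulmxKtV (1%:M : 'M[C]_n) Gu _.
  rewrite mul1mx adj_t adjmx_col mul_row_col; apply.
  by rewrite rK subnKC.
have Wstab j : (W *m Y j <= W)%MS.
  apply/row_subP => r; rewrite row_mul; case: (split_ordP r) => i ->.
    by rewrite rowWl; exact: s.
  by rewrite rowWr -JY; apply/J_sub/s.
have WYB j : W *m Y j *m adjmx B = 0.
  by have /submxP[D ->] := Wstab j; rewrite -mulmxA WB mulmx0.
pose Yc j := B *m Y j *m adjmx B.
have BB : adjmx B *m B = 1%:M - adjmx W *m W by rewrite -complete (addrC (adjmx W *m W)) addrK.
have YcM a b : Yc a *m Yc b = B *m (Y a *m Y b) *m adjmx B.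
  rewrite /Yc -!mulmxA (mulmxA (adjmx B) B) BB mulmxBl mul1mx mulmxBr mulmxBr.
  by rewrite -(mulmxA (adjmx W)) (mulmxA W) WYB !mulmx0 subr0.
have Yccomm a b : Yc a *m Yc b = Yc b *m Yc a by rewrite !YcM Ycomm.
have r0 : (0 < \rank K)%N.
  by rewrite rK subn_gt0; lia.
have cAs : {in [seq Yc j | j <- enum 'I_k] &, forall A B, comm_mx A B}.
  by move=> _ _ /mapP[a _ ->] /mapP[b _ ->]; apply: Yccomm.
have [y y0 yst] := common_eigenvector r0 cAs.
set y1 := schmidt y.
have y1u : y1 *m adjmx y1 = 1%:M by apply/unit_adj/schmidt_unitarymx.
have ey : (y1 :=: y)%MS.
  by apply: eqmx_schmidt_free; rewrite /row_free rank_rV y0.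
have ya j : exists a, y1 *m Yc j = a *: y1.
  apply/sub_rVP; rewrite (eqmxMr _ ey) ey.
  by move/allP: yst; apply; apply/mapP; exists j; rewrite ?mem_enum.
pose v := y1 *m B.
have vW : v *m adjmx W = 0 by rewrite /v -mulmxA BW mulmx0.
have vv : v *m adjmx v = 1%:M.
  by rewrite /v adjmxM mulmxA -(mulmxA y1) Bu mulmx1 y1u.
have vY j : exists a, v *m Y j = v *m Y j *m adjmx W *m W + a *: v.
  have [a ea] := ya j; exists a.
  rewrite -{1}[v *m Y j]mulmx1 -complete mulmxDr !mulmxA; congr (_ + _).
  have -> : v *m Y j *m adjmx B = y1 *m Yc j by rewrite /Yc /v !mulmxA.
  by rewrite ea -scalemxAl.
exists v.
pose q' := fun i => if i == m then v else q i.
change (Inv m.+1 q').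
have q'm : q' m = v by rewrite /q' eqxx.
have q'i i : (i < m)%N -> q' i = q i by move=> im; rewrite /q' (ltn_eqF im).
have cs i : (i < m.+1)%N -> i = m \/ (i < m)%N.
  by rewrite ltnS leq_eqVlt => /orP[/eqP|]; auto.
have W'1 : (W <= Wm m.+1 q')%MS.
  apply/row_subP => r; case: (split_ordP r) => i ->; have im := ltn_ord i.
    by rewrite rowWl -(q'i _ im); apply: qW; apply: ltnW.
  by rewrite rowWr -(q'i _ im); apply: JqW; apply: ltnW.
have vW' : (v <= Wm m.+1 q')%MS by rewrite -q'm qW.
have Jv : J v *m adjmx W = 0 := Jperp vW.
have WJv : W *m adjmx (J v) = 0.
  by have := congr1 (fun A => adjmx A) Jv; rewrite adjmxM adjmxK adjmx0.
have vJv : v *m adjmx (J v) = 0.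
  have h := JperpE v v; rewrite tr11 in h.
  move: h; set x := v *m adjmx (J v) => h.
  have : x *+ 2 = 0 by rewrite mulr2n {1}h addNr.
  by move/eqP; rewrite -scaler_nat scaler_eq0 pnatr_eq0 orFb => /eqP.
rewrite /Inv; split; split.
- by move=> i /cs [->|im]; [rewrite q'm | rewrite q'i // o1].
- move=> i j /cs[->|im] /cs[->|jm] ij.
  + by rewrite eqxx in ij.
  + by rewrite q'm q'i //; apply: perpR (qW q jm) vW.
  + by rewrite q'm q'i //; apply: perpL (qW q im) vW.
  + by rewrite !q'i //; apply: o2.
- move=> i j /cs[->|im] /cs[->|jm].
  + by rewrite q'm.
  + by rewrite q'm q'i //; apply: perpR (JqW q jm) vW.
  + by rewrite q'm q'i //; apply: perpL (qW q im) Jv.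
  + by rewrite !q'i //; apply: o3.
- move=> j i /cs[->|im].
  + rewrite q'm; have [a ->] := vY j.
    by rewrite addmx_sub ?scalemx_sub // (submx_trans (submxMl _ _) W'1).
  + by rewrite q'i //; apply: submx_trans (s j i im) W'1.
- move=> j c i ci /cs[ei|im].
  + rewrite ei in ci *; rewrite q'm q'i //; exact: perpL (s j c ci) vW.
  + by rewrite !q'i //; [apply: t | apply: ltn_trans ci im].
- move=> j c i ci /cs[ei|im].
  + rewrite ei in ci *; rewrite q'm; case: (cs c ci) => [->|cm].
      rewrite q'm; have [a ->] := vY j.
      by rewrite mulmxDl -scalemxAl vJv scaler0 addr0 -mulmxA WJv mulmx0.
    by rewrite q'i //; exact: perpL (s j c cm) Jv.
  + by rewrite !q'i //; [apply: u | apply: leq_ltn_trans ci im].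
Qed.

Lemma build m : (m <= N)%N -> exists q, Inv m q.
Proof.
elim: m => [_|m IH mN]; first by exists (fun _ => 0); apply: Inv0.
have [q Iq] := IH (ltnW mN).
by have [v Iv] := step Iq mN; eexists; exact: Iv.
Qed.

Lemma tri_exists : exists P : 'M[C]_n,
  [/\ P *m adjmx P = 1%:M, mxconj P *m Z = Z *m P,
      forall j (c i : 'I_N), (c < i)%N -> (P *m Y j *m adjmx P) (lshift N c) (lshift N i) = 0 &
      forall j (c i : 'I_N), (c <= i)%N -> (P *m Y j *m adjmx P) (lshift N c) (rshift N i) = 0].
Proof.
have [q [[o1 o2 o3] [s t u]]] := build (leqnn N).
exists (Wm N q); split.
- exact: Wunit.
- by rewrite -JW.
- by move=> j c i ci; rewrite mx_entry row_mul !rowWl (t j c i) ?mxE.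
- by move=> j c i ci; rewrite mx_entry row_mul rowWl rowWr (u j c i) ?mxE.
Qed.
End Quat.

Lemma part1 (C : numClosedFieldType) N k (X : 'I_k -> 'M[C]_(N + N)) :
  (forall j l, X j *m X l = X l *m X j) ->
  (forall j, adjmx (X j) = sharp (X j)) ->
  exists U : 'M[C]_(N + N), symplectic_unitary U /\
    forall j, exists (T S : 'M[C]_N),
      [/\ upper_tri T, strict_upper_tri S &
          adjmx U *m X j *m U = block_mx T S (- mxconj S) (mxconj T)].
Proof.
move=> HX HS.
have XJ j : Zmx C N *m mxconj (X j) = X j *m Zmx C N.
  have e : mxconj (X j) = - (Zmx C N *m X j *m Zmx C N).
    rewrite -[mxconj (X j)]trmxK -/(adjmx (X j)) HS /sharp linearN /= !trmx_mul trmxK trZmx mulmxN.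
    by rewrite mulNmx mulmxN opprK mulmxA.
  by rewrite e mulmxN !mulmxA ZZmx !mulNmx mul1mx opprK.
have YJ j : mxconj ((X j)^T) *m Zmx C N = Zmx C N *m (X j)^T.
  apply: trmx_inj; rewrite !trmx_mul mxconj_tr !trmxK trZmx mulNmx mulmxN.
  by rewrite XJ.
have Yc j l : (X j)^T *m (X l)^T = (X l)^T *m (X j)^T by rewrite -!trmx_mul HX.
have [P [Pu PZ Ht Hu]] := tri_exists Yc YJ.
have PZ' : P *m Zmx C N = Zmx C N *m mxconj P.
  by have := congr1 (fun A => mxconj A) PZ; rewrite /= !mxconjM mxconjK mxconjZmx.
have ZPT : Zmx C N *m adjmx P = P^T *m Zmx C N.
  have := congr1 trmx PZ; rewrite !trmx_mul trZmx mulNmx mulmxN => /oppr_inj.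
  by rewrite /adjmx.
have cPPT : mxconj P *m P^T = 1%:M by rewrite -mxconj_adj -mxconjM Pu mxconj1.
exists P^T; split.
  split; first by rewrite /unitary_mx adj_tr.
  by rewrite trmxK PZ' -mulmxA cPPT mulmx1.
move=> j.
set M := adjmx P^T *m X j *m P^T.
have MT : M = (P *m (X j)^T *m adjmx P)^T.
  by rewrite /M adj_tr !trmx_mul trmxK /adjmx trmxK mulmxA.
have MZ : Zmx C N *m mxconj M = M *m Zmx C N.
  rewrite /M adj_tr !mxconjM mxconjK mxconj_tr -/(adjmx P).
  rewrite !mulmxA -PZ -(mulmxA _ (Zmx C N)) XJ -!mulmxA ZPT.
  by rewrite !mulmxA.
have eM := quat_block MZ.
exists (ulsubmx M), (ursubmx M); split => //.
  move=> i c ci.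
  have -> : ulsubmx M i c = M (lshift N i) (lshift N c) by rewrite !mxE.
  by rewrite MT mxE Ht.
move=> i c ci.
have edl : dlsubmx M = - mxconj (ursubmx M) by rewrite {1}eM block_mxKdl.
have -> : ursubmx M = - mxconj (dlsubmx M) by rewrite edl mxconjN mxconjK opprK.
  have -> : (- mxconj (dlsubmx M)) i c = - (M (rshift N i) (lshift N c))^* by rewrite !mxE.
  by rewrite MT mxE Hu // conjC0 oppr0.
Qed.

Lemma normal_tri (C : numClosedFieldType) n (M : 'M[C]_n) (ord : 'I_n -> nat) :
  injective ord -> (forall a b, (ord b < ord a)%N -> M a b = 0) -> normal_mx M ->
  forall a b, a != b -> M a b = 0.
Proof.
move=> inj tri nM.
suff H K a : (ord a < K)%N -> forall b, b != a -> M b a = 0 /\ M a b = 0.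
  move=> a b ab; have ba : b != a by rewrite eq_sym.
  by have [] := H (ord a).+1 a (ltnSn _) b ba.
elim: K a => [//|K IH] a aK b ba.
have col b' : b' != a -> M b' a = 0.
  move=> b'a; case: (ltngtP (ord a) (ord b')) => h.
  - exact: tri.
  - have ab : a != b' by rewrite eq_sym.
    by have [] := IH b' (leq_trans h aK) a ab.
  - by move/inj: h => h; rewrite h eqxx in b'a.
split; first exact: col.
have e := congr1 (fun A : 'M[C]_n => A a a) (nM : M *m adjmx M = adjmx M *m M); move: e => /=.
rewrite /adjmx !mxE (bigD1 a) //= [in RHS](bigD1 a) //= [in RHS]big1 => [|j ja]; last first.
  by rewrite !mxE col // conjC0 mul0r.
rewrite !mxE addr0 (mulrC (M a a)^*) => /eqP.
rewrite -[X in _ == X]addr0 => /eqP/addrI S0.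
have := psumr_eq0P (P := fun j => j != a) (F := fun j => M a j * ((adjmx M) j a)) _ S0.
move=> /(_ _ b ba); rewrite /adjmx !mxE => h.
have : M a b * (M a b)^* = 0.
  by apply: h => i _; rewrite !mxE; exact: mul_conjC_ge0.
by move/eqP; rewrite mul_conjC_eq0 => /eqP.
Qed.

Lemma part2 (C : numClosedFieldType) N k (X : 'I_k -> 'M[C]_(N + N)) :
  (forall j l, X j *m X l = X l *m X j) ->
  (forall j, adjmx (X j) = sharp (X j)) ->
  (forall j, normal_mx (X j)) ->
  exists U : 'M[C]_(N + N), symplectic_unitary U /\
    forall j, exists D : 'M[C]_N,
      diag_matrix D /\ adjmx U *m X j *m U = block_mx D 0 0 (mxconj D).
Proof.
move=> HX HS HN.
have [U [[Uu UZ] H]] := part1 HX HS.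
exists U; split => // j.
have [T [S [Tu Su eM]]] := H j.
move: eM; set M := adjmx U *m X j *m U => eM.
have UU : U *m adjmx U = 1%:M by apply: mulmx1C.
have nM : normal_mx M.
  rewrite /normal_mx /M !adjmxM adjmxK !mulmxA -!(mulmxA _ U (adjmx U)) UU !mulmx1.
  by rewrite -(mulmxA _ (X j)) (HN j : X j *m adjmx (X j) = _) mulmxA.
pose ord (a : 'I_(N + N)) := if (a < N)%N then (2 * a)%N else (2 * (a - N) + 1)%N.
have ordL (i : 'I_N) : ord (lshift N i) = (2 * i)%N by rewrite /ord /= ltn_ord.
have ordR (i : 'I_N) : ord (rshift N i) = (2 * i + 1)%N.
  by rewrite /ord /= ltnNge leq_addr /= addKn.
have inj : injective ord.
  move=> a b; rewrite /ord => e; apply: val_inj => /=.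
  by case: ifP e => ha; case: ifP => hb; lia.
have tri a b : (ord b < ord a)%N -> M a b = 0.
  rewrite eM; case: (split_ordP a) => i ->; case: (split_ordP b) => c ->;
    rewrite ?ordL ?ordR => h.
  - by rewrite block_mxEul Tu //; lia.
  - by rewrite block_mxEur Su //; lia.
  - by rewrite block_mxEdl !mxE Su ?conjC0 ?oppr0 //; lia.
  - by rewrite block_mxEdr mxE Tu ?conjC0 //; lia.
have off := normal_tri inj tri nM.
have S0 : S = 0.
  apply/matrixP => i c; rewrite mxE.
  have := off (lshift N i) (rshift N c); rewrite eq_lrshift eM block_mxEur.
  by apply.
exists T; split.
  move=> i c ic; have := off (lshift N i) (lshift N c).
  by rewrite eq_lshift eM block_mxEul; apply.
by rewrite eM S0 mxconj0 oppr0.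
Qed.

Lemma part3 (C : numClosedFieldType) N (U : 'M[C]_(N + N)) :
  symplectic_unitary U -> \det U = 1.
Proof.
move=> [Uu UZ].
have UU : U *m adjmx U = 1%:M by apply: mulmx1C.
have e : U^T *m Zmx C N = Zmx C N *m adjmx U.
  by rewrite -[in RHS]UZ -!mulmxA UU mulmx1.
have HS : adjmx U = sharp U.
  by rewrite /sharp -mulmxA e mulmxA ZZmx mulNmx mul1mx opprK.
have [V [[Vu _] H]] := part2 (X := fun _ : 'I_1 => U) (fun _ _ => erefl)
  (fun _ => HS) (fun _ => etrans UU (esym Uu)).
have [D [_ eV]] := H ord0.
have detconj m (A : 'M[C]_m) : \det (mxconj A) = (\det A)^*.
  by rewrite /mxconj det_map_mx.
have dadj m (A : 'M[C]_m) : \det (adjmx A) = (\det A)^*.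
  by rewrite /adjmx det_tr detconj.
have d1 : (\det U)^* * \det U = 1 by rewrite -dadj -det_mulmx Uu det1.
have dV : (\det V)^* * \det V = 1 by rewrite -dadj -det_mulmx Vu det1.
have := congr1 determinant eV.
rewrite det_ublock !det_mulmx detconj dadj mulrAC dV mul1r => dU.
set x := \det D * (\det D)^* in dU.
have x0 : 0 <= x by exact: mul_conjC_ge0.
have xc : x^* = x by rewrite geC0_conj.
rewrite dU in d1 *; rewrite xc in d1.
have : (x ^+ 2 == 1) by rewrite expr2 d1.
rewrite sqrf_eq1 => /orP[/eqP //|/eqP xm1].
by move: x0; rewrite xm1 oppr_ge0 ler10.
Qed.

Theorem mainTheorem1 (R : realType) (N k : nat) (X : 'I_k -> 'M[R[i]]_(N + N)) :
  (forall j l : 'I_k, X j *m X l = X l *m X j) ->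
  (forall j : 'I_k, adjmx (X j) = sharp (X j)) ->
  [/\ (exists U : 'M[R[i]]_(N + N), symplectic_unitary U /\
         forall j : 'I_k, exists (T S : 'M[R[i]]_N),
           [/\ upper_tri T, strict_upper_tri S &
               adjmx U *m X j *m U = block_mx T S (- mxconj S) (mxconj T)]),
      ((forall j : 'I_k, normal_mx (X j)) ->
       exists U : 'M[R[i]]_(N + N), symplectic_unitary U /\
         forall j : 'I_k, exists D : 'M[R[i]]_N,
           diag_matrix D /\ adjmx U *m X j *m U = block_mx D 0 0 (mxconj D))
    & forall U : 'M[R[i]]_(N + N), symplectic_unitary U -> \det U = 1].
Proof.
move=> HX HS; split.
- exact: part1 HX HS.
- exact: part2 HX HS.
- move=> U; exact: part3.
Qed.
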